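(* Let $m>0$, let $k$ be a nonzero integer and $\lambda\le 0$. Let $\gamma$ be the maximal solution of the initial value problem $$\gamma'(r)+\gamma(r)^2=-\frac{1}{4r^2}+\frac{k^2}{r^2}-\frac{m}{r^3}\Big(1+\frac{m}{2r}\Big)^{-2}-\lambda\Big(1+\frac{m}{2r}\Big)^4,\qquad \gamma(m/2)=m^{-1}.$$ Then $\gamma$ is defined and finite on all of $[m/2,\infty)$; in particular, for no $R>m/2$ does one have $\lim_{r\to R^-}\gamma(r)=-\infty$. Equivalently, for every $R>m/2$ there is no nonzero solution $v$ of $v''+v\big(\frac{1}{4r^2}-\frac{k^2}{r^2}+\frac{m}{r^3}(1+\frac{m}{2r})^{-2}+\lambda(1+\frac{m}{2r})^4\big)=0$ on $[m/2,R]$ with $v'(m/2)=m^{-1}v(m/2)$ and $v(R)=0$. *)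

(* Defs.v *)
From Stdlib Require Import Reals ZArith.
Open Scope R_scope.

Definition Qpot (m : R) (k : Z) (lam : R) (r : R) : R :=
  - / (4 * r ^ 2) + (IZR k) ^ 2 / r ^ 2
  - m / r ^ 3 * (/ (1 + m / (2 * r))) ^ 2
  - lam * (1 + m / (2 * r)) ^ 4.

(* Main.v *)
Require Import Defs.
From Stdlib Require Import Reals ZArith Lra Lia Psatz Ranalysis5.
From Coquelicot Require Import Coquelicot.
Open Scope R_scope.
Lemma IZR_sq_ge1 (k : Z) : k <> 0%Z -> 1 <= IZR k ^ 2.
Proof.
  intros hk. replace (IZR k ^ 2) with (IZR (k * k)) by (rewrite mult_IZR; ring).
  apply IZR_le. nia.
Qed.

Lemma Qpos (m : R) (k : Z) (lam r : R) : 0 < m -> k <> 0%Z -> lam <= 0 -> 0 < r ->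
  0 <= Qpot m k lam r.
Proof.
  intros hm hk hl hr. unfold Qpot.
  pose proof (IZR_sq_ge1 k hk) as hk2.
  set (t := m / (2 * r)).
  assert (ht : 0 < t) by (unfold t; apply Rdiv_lt_0_compat; lra).
  assert (hmr : m = 2 * r * t) by (unfold t; field; lra).
  set (p := 1 + t).
  assert (hp : 1 <= p) by (unfold p; lra).
  assert (h4 : 0 <= - (lam * p ^ 4)) by (rewrite Ropp_mult_distr_l; apply Rmult_le_pos; [lra| apply pow_le; lra]).
  assert (hx : m / r ^ 3 * (/ p) ^ 2 <= 3 / 4 / r ^ 2).
  { rewrite hmr. assert (0 < p) by lra.
    replace (2 * r * t / r ^ 3 * (/ p) ^ 2) with ((2 * t) / (p^2) / r^2) by (field; lra).
    unfold Rdiv at 1 3. apply Rmult_le_compat_r. apply Rlt_le, Rinv_0_lt_compat. nra.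
    apply (Rmult_le_reg_r (p^2)). nra. unfold Rdiv. rewrite Rmult_assoc, Rinv_l by nra.
    unfold p. nra. }
  assert (hr2 : 0 < r ^ 2) by nra.
  assert (IZR k ^ 2 / r ^ 2 >= 1 / r ^ 2).
  { unfold Rdiv. apply Rle_ge, Rmult_le_compat_r. apply Rlt_le, Rinv_0_lt_compat; lra. lra. }
  assert (/ (4 * r ^ 2) = 1/4 / r^2) by (field; lra).
  assert (0 < 1 / r^2) by (apply Rdiv_lt_0_compat; lra).
  replace (3/4/r^2) with (3/4 * (1/r^2)) in hx by (field; lra).
  replace (1/4/r^2) with (1/4 * (1/r^2)) in H0 by (field; lra).
  rewrite H0. clearbody p t. generalize dependent (IZR k ^ 2 / r ^ 2). generalize dependent (m / r ^ 3 * (/ p) ^ 2). generalize dependent (1 / r ^ 2). generalize dependent (lam * p ^ 4). intros. lra.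
Qed.
Lemma abs_inv x y : Rabs x <= y -> - y <= x <= y.
Proof. unfold Rabs; destruct (Rcase_abs x); lra. Qed.

Lemma rint_der (f : R -> R) (r0 : R) : (forall x, continuity_pt f x) ->
  forall x, derivable_pt_lim (fun y => RInt f r0 y) x (f x).
Proof.
  intros hf x. apply is_derive_Reals.
  apply (is_derive_RInt f (fun y => RInt f r0 y) r0 x).
  - apply filter_forall. intros y. apply (@RInt_correct R_CompleteNormedModule). apply (@ex_RInt_continuous R_CompleteNormedModule).
    intros z _. apply continuity_pt_filterlim; auto.
  - apply continuity_pt_filterlim; auto.
Qed.

Lemma geo_small (D e : R) : 0 < e -> exists N, forall n, (N <= n)%nat -> Rabs (D * (/2) ^ n) < e.
Proof.
  intros he.
  destruct (pow_lt_1_zero (/2) ltac:(rewrite Rabs_pos_eq; lra) (e / (Rabs D + 1)))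
    as [N HN].
  { apply Rdiv_lt_0_compat; [lra| pose proof (Rabs_pos D); lra]. }
  exists N. intros n hn. specialize (HN n hn). rewrite Rabs_mult.
  assert (0 <= Rabs D) by apply Rabs_pos.
  assert (Rabs ((/2)^n) * (Rabs D + 1) < e).
  { apply (Rmult_lt_compat_r (Rabs D + 1)) in HN; [|lra].
    unfold Rdiv in HN. rewrite Rmult_assoc, Rinv_l in HN by lra. lra. }
  assert (0 <= Rabs ((/2)^n)) by apply Rabs_pos. nra.
Qed.

Definition Lim (u : nat -> R) : R := real (Lim_seq u).

Lemma tele (u : nat -> R) (D : R) : (forall n, Rabs (u (S n) - u n) <= D * (/2) ^ n) ->
  forall p n, Rabs (u (n + p)%nat - u n) <= 2 * D * (/2) ^ n - 2 * D * (/2) ^ (n + p).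
Proof.
  intros h p. induction p as [|p IH]; intros n.
  - rewrite Nat.add_0_r. unfold Rminus. rewrite Rplus_opp_r, Rabs_R0. lra.
  - replace (n + S p)%nat with (S (n + p)) by lia.
    specialize (h (n + p)%nat). specialize (IH n).
    pose proof (Rabs_triang (u (S (n+p)) - u (n+p)%nat) (u (n+p)%nat - u n)).
    replace (u (S (n+p)) - u (n+p)%nat + (u (n+p)%nat - u n)) with (u (S (n + p)) - u n) in H by ring.
    simpl pow in *. 
    replace (2 * D * (/ 2 * (/ 2) ^ (n + p))) with (D * (/2)^(n+p)) by field. lra.
Qed.

Lemma geo_conv (u : nat -> R) (D : R) : (forall n, Rabs (u (S n) - u n) <= D * (/2) ^ n) ->
  Un_cv u (Lim u) /\ forall n, Rabs (Lim u - u n) <= 2 * D * (/2) ^ n.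
Proof.
  intros h. pose proof (tele u D h) as ht.
  assert (hD : 0 <= D).
  { specialize (h O). simpl in h. pose proof (Rabs_pos (u 1%nat - u 0%nat)). lra. }
  assert (hc : ex_finite_lim_seq u).
  { apply (proj2 (ex_lim_seq_cauchy_corr u)). intros eps.
    destruct (geo_small (2 * D) eps (cond_pos eps)) as [N HN].
    exists N. intros n q hn hq.
    assert (key : forall i j, (N <= i)%nat -> (i <= j)%nat -> Rabs (u j - u i) < eps).
    { intros i j hi hij. replace j with (i + (j - i))%nat by lia.
      specialize (ht (j - i)%nat i). specialize (HN i hi).
      assert (0 <= 2 * D * (/2)^(i + (j-i))). { apply Rmult_le_pos; [lra|apply pow_le; lra]. }
      rewrite Rabs_pos_eq in HN by (apply Rmult_le_pos; [lra|apply pow_le; lra]). lra. }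
    destruct (Nat.le_ge_cases n q) as [hnq|hnq].
    - rewrite Rabs_minus_sym. apply key; auto.
    - apply key; auto. }
  assert (hl : Un_cv u (Lim u)).
  { apply is_lim_seq_Reals. unfold Lim.
    destruct hc as [l hl']. rewrite (is_lim_seq_unique _ _ hl'). simpl. exact hl'. }
  split; auto.
  intros n. apply le_epsilon. intros eps he.
  destruct (hl eps he) as [N HN].
  specialize (HN (n + N)%nat ltac:(lia)). unfold R_dist in HN.
  specialize (ht N n).
  assert (0 <= 2 * D * (/2)^(n + N)). { apply Rmult_le_pos; [lra|apply pow_le; lra]. }
  pose proof (Rabs_triang (Lim u - u (n + N)%nat) (u (n + N)%nat - u n)).
  replace (Lim u - u (n + N)%nat + (u (n + N)%nat - u n)) with (Lim u - u n) in H0 by ring.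
  rewrite Rabs_minus_sym in HN. lra.
Qed.
Lemma mono (f f' : R -> R) a b : a <= b ->
  (forall c, a <= c <= b -> derivable_pt_lim f c (f' c)) ->
  (forall c, a <= c <= b -> 0 <= f' c) -> f a <= f b.
Proof.
  intros hab hd hp. destruct (Req_dec a b) as [->|hne]; [lra|].
  destruct (MVT_cor2 f f' a b) as [c [hc1 hc2]]; [lra|exact hd|].
  assert (0 <= f' c) by (apply hp; lra).
  assert (0 <= f' c * (b - a)) by (apply Rmult_le_pos; lra). lra.
Qed.

Lemma Lcmp (F F' G G' : R -> R) a b : a <= b ->
  (forall c, a <= c <= b -> derivable_pt_lim F c (F' c)) ->
  (forall c, a <= c <= b -> derivable_pt_lim G c (G' c)) ->
  (forall c, a <= c <= b -> Rabs (F' c) <= G' c) ->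
  Rabs (F b - F a) <= G b - G a.
Proof.
  intros hab hF hG hb.
  assert (h1 : (fun x => G x - F x) a <= (fun x => G x - F x) b).
  { apply (mono (fun x => G x - F x) (fun x => G' x - F' x)); auto.
    - intros; apply (derivable_pt_lim_minus G F); auto.
    - intros c hc; specialize (hb c hc). apply abs_inv in hb. lra. }
  assert (h2 : (fun x => G x + F x) a <= (fun x => G x + F x) b).
  { apply (mono (fun x => G x + F x) (fun x => G' x + F' x)); auto.
    - intros; apply (derivable_pt_lim_plus G F); auto.
    - intros c hc; specialize (hb c hc). apply abs_inv in hb. lra. }
  simpl in *. apply Rabs_le. lra.
Qed.

Definition W (K r0 s : R) := exp (2 * K * (s - r0)) + exp (2 * K * (r0 - s)).

Lemma W_ge1 K r0 s : 1 <= W K r0 s.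
Proof.
  unfold W. pose proof (exp_ineq1_le (2 * K * (s - r0))).
  pose proof (exp_ineq1_le (2 * K * (r0 - s))). lra.
Qed.

Lemma Lstep (F H : R -> R) (K D r0 A B : R) : 0 < K -> 0 <= D -> A <= r0 <= B ->
  (forall x, derivable_pt_lim F x (H x)) -> F r0 = 0 ->
  (forall s, A <= s <= B -> Rabs (H s) <= K * D * W K r0 s) ->
  forall s, A <= s <= B -> Rabs (F s) <= D / 2 * W K r0 s.
Proof.
  intros hK hD hr hF hF0 hH s hs.
  set (G := fun x => D / 2 * (exp (2 * K * (x - r0)) - exp (2 * K * (r0 - x)))).
  assert (hG : forall x, derivable_pt_lim G x (K * D * W K r0 x)).
  { intros x. apply is_derive_Reals. unfold G, W. auto_derive; auto. unfold Rminus. field. }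
  pose proof (exp_pos (2 * K * (s - r0))). pose proof (exp_pos (2 * K * (r0 - s))).
  assert (hG0 : G r0 = 0). { unfold G. replace (r0 - r0) with 0 by ring. ring. }
  destruct (Rle_dec r0 s) as [h|h].
  - pose proof (Lcmp F H G (fun x => K * D * W K r0 x) r0 s h
      ltac:(intros; auto) ltac:(intros; auto) ltac:(intros; apply hH; lra)) as hc.
    rewrite hF0, hG0, Rminus_0_r, Rminus_0_r in hc. unfold G, W in *. nra.
  - pose proof (Lcmp F H G (fun x => K * D * W K r0 x) s r0 ltac:(lra)
      ltac:(intros; auto) ltac:(intros; auto) ltac:(intros; apply hH; lra)) as hc.
    rewrite hF0, hG0, Rabs_minus_sym, Rminus_0_r in hc. unfold G, W in *. nra.
Qed.
Fixpoint it (Q : R -> R) (r0 a b : R) (n : nat) : (R -> R) * (R -> R) :=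
  match n with
  | O => (fun _ => a, fun _ => b)
  | S n => let p := it Q r0 a b n in
      (fun r => a + RInt (snd p) r0 r, fun r => b + RInt (fun s => Q s * fst p s) r0 r)
  end.

Definition vn Q r0 a b n := fst (it Q r0 a b n).
Definition wn Q r0 a b n := snd (it Q r0 a b n).

Lemma vn_S Q r0 a b n : vn Q r0 a b (S n) = fun r => a + RInt (wn Q r0 a b n) r0 r.
Proof. reflexivity. Qed.
Lemma wn_S Q r0 a b n : wn Q r0 a b (S n) = fun r => b + RInt (fun s => Q s * vn Q r0 a b n s) r0 r.
Proof. reflexivity. Qed.

Lemma der_cont f x l : derivable_pt_lim f x l -> continuity_pt f x.
Proof. intros h. apply derivable_continuous_pt. exists l. exact h. Qed.

Lemma der_int (f : R -> R) (a r0 : R) : (forall x, continuity_pt f x) ->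
  forall x, derivable_pt_lim (fun r => a + RInt f r0 r) x (f x).
Proof.
  intros hf x. replace (f x) with (0 + f x) by ring.
  apply (derivable_pt_lim_plus (fun _ => a) (fun r => RInt f r0 r)).
  apply derivable_pt_lim_const. apply rint_der; auto.
Qed.

Section It.
Variables (Q : R -> R) (r0 a b : R).
Hypothesis hQ : forall x, continuity_pt Q x.

Lemma it_cont n : (forall x, continuity_pt (vn Q r0 a b n) x) /\
                  (forall x, continuity_pt (wn Q r0 a b n) x).
Proof.
  induction n as [|n [IH1 IH2]].
  - split; intros x; apply continuity_pt_const; intros ? ?; reflexivity.
  - split; intros x; [rewrite vn_S | rewrite wn_S]; eapply der_cont; apply der_int; auto.
    intros y. apply continuity_pt_mult; auto.
Qed.

Lemma der_v n x : derivable_pt_lim (vn Q r0 a b (S n)) x (wn Q r0 a b n x).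
Proof. rewrite vn_S. apply der_int. apply it_cont. Qed.

Lemma der_w n x : derivable_pt_lim (wn Q r0 a b (S n)) x (Q x * vn Q r0 a b n x).
Proof. rewrite wn_S. apply (der_int (fun s => Q s * vn Q r0 a b n s)).
  intros y. apply continuity_pt_mult; auto. apply it_cont. Qed.

Lemma v_r0 n : vn Q r0 a b n r0 = a.
Proof. destruct n; [reflexivity|]. rewrite vn_S. rewrite RInt_point. simpl. unfold zero; simpl. ring. Qed.
Lemma w_r0 n : wn Q r0 a b n r0 = b.
Proof. destruct n; [reflexivity|]. rewrite wn_S. rewrite RInt_point. simpl. unfold zero; simpl. ring. Qed.

Definition dv n s := vn Q r0 a b (S n) s - vn Q r0 a b n s.
Definition dw n s := wn Q r0 a b (S n) s - wn Q r0 a b n s.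

Lemma Lbnd A B K C : 1 <= K -> A <= r0 <= B -> (forall s, A <= s <= B -> Rabs (Q s) <= K) ->
  (forall s, A <= s <= B -> Rabs (dv 0 s) <= C /\ Rabs (dw 0 s) <= C) ->
  forall n s, A <= s <= B -> Rabs (dv n s) <= C * (/2)^n * W K r0 s /\
                              Rabs (dw n s) <= C * (/2)^n * W K r0 s.
Proof.
  intros hK hr hQK h0.
  assert (hC : 0 <= C). { destruct (h0 r0 hr) as [h _]. pose proof (Rabs_pos (dv 0 r0)). lra. }
  induction n as [|n IH]; intros s hs.
  - pose proof (W_ge1 K r0 s). simpl. destruct (h0 s hs). split; nra.
  - assert (hD : 0 <= C * (/2)^n) by (apply Rmult_le_pos; [lra|apply pow_le; lra]).
    replace (C * (/2)^(S n)) with (C * (/2)^n / 2) by (simpl; field).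
    split.
    + apply (Lstep (dv (S n)) (dw n) K (C * (/2)^n) r0 A B); auto; try lra.
      * intros x. unfold dv, dw. apply (derivable_pt_lim_minus (vn Q r0 a b (S (S n))) (vn Q r0 a b (S n))); apply der_v.
      * unfold dv. rewrite !v_r0. ring.
      * intros s' hs'. destruct (IH s' hs') as [_ h]. pose proof (W_ge1 K r0 s').
        assert (0 <= C * (/2)^n * W K r0 s') by nra. nra.
    + apply (Lstep (dw (S n)) (fun x => Q x * dv n x) K (C * (/2)^n) r0 A B); auto; try lra.
      * intros x. unfold dv, dw. replace (Q x * (vn Q r0 a b (S n) x - vn Q r0 a b n x)) with
          (Q x * vn Q r0 a b (S n) x - Q x * vn Q r0 a b n x) by ring.
        apply (derivable_pt_lim_minus (wn Q r0 a b (S (S n))) (wn Q r0 a b (S n))); apply der_w.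
      * unfold dw. rewrite !w_r0. ring.
      * intros s' hs'. destruct (IH s' hs') as [h _]. pose proof (W_ge1 K r0 s').
        specialize (hQK s' hs'). rewrite Rabs_mult.
        assert (0 <= C * (/2)^n * W K r0 s') by nra.
        pose proof (Rabs_pos (Q s')). pose proof (Rabs_pos (dv n s')).
        apply Rle_trans with (K * (C * (/2)^n * W K r0 s')); [|nra].
        apply Rmult_le_compat; auto.
Qed.

End It.
Lemma cont_abs f x : continuity_pt f x -> continuity_pt (fun y => Rabs (f y)) x.
Proof. intros h. apply (continuity_pt_comp f Rabs x h). apply Rcontinuity_abs. Qed.

Lemma W_le K r0 A B s : 0 <= K -> A <= r0 <= B -> A <= s <= B -> W K r0 s <= 2 * exp (2 * K * (B - A)).
Proof.
  intros hK hr hs. unfold W.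
  assert (forall u v, u <= v -> exp u <= exp v).
  { intros u v huv. destruct (Req_dec u v) as [->|]; [lra|]. apply Rlt_le, exp_increasing. lra. }
  assert (exp (2 * K * (s - r0)) <= exp (2 * K * (B - A))) by (apply H; nra).
  assert (exp (2 * K * (r0 - s)) <= exp (2 * K * (B - A))) by (apply H; nra). lra.
Qed.

Lemma Lbnd2 Q r0 a b (hQ : forall x, continuity_pt Q x) A B : A <= r0 <= B ->
  exists D K, 0 < K /\ (forall s, A <= s <= B -> Rabs (Q s) <= K) /\
   forall n s, A <= s <= B -> Rabs (dv Q r0 a b n s) <= D * (/2)^n /\
                              Rabs (dw Q r0 a b n s) <= D * (/2)^n.
Proof.
  intros hr.
  destruct (continuity_ab_maj (fun s => Rabs (Q s)) A B ltac:(lra)) as [M [hM _]].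
  { intros c _. apply cont_abs; auto. }
  destruct (continuity_ab_maj (fun s => Rabs (dv Q r0 a b 0 s) + Rabs (dw Q r0 a b 0 s)) A B ltac:(lra))
    as [M2 [hM2 _]].
  { intros c _. destruct (it_cont Q r0 a b hQ 1) as [h1 h2]. destruct (it_cont Q r0 a b hQ 0) as [h3 h4].
    apply continuity_pt_plus; apply cont_abs; unfold dv, dw; apply continuity_pt_minus; auto. }
  set (K := Rmax 1 (Rabs (Q M))). set (C := Rabs (dv Q r0 a b 0 M2) + Rabs (dw Q r0 a b 0 M2)).
  assert (hK : 1 <= K) by apply Rmax_l.
  pose proof (Lbnd Q r0 a b hQ A B K C hK hr) as hb.
  exists (C * (2 * exp (2 * K * (B - A)))), K. split; [lra|]. split.
  { intros s hs. specialize (hM s hs). simpl in hM. pose proof (Rmax_r 1 (Rabs (Q M))). fold K in H. lra. }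
  assert (hb' : forall n s, A <= s <= B -> Rabs (dv Q r0 a b n s) <= C * (/ 2) ^ n * W K r0 s /\
                              Rabs (dw Q r0 a b n s) <= C * (/ 2) ^ n * W K r0 s).
  { apply hb.
    - intros s hs. specialize (hM s hs). simpl in hM. pose proof (Rmax_r 1 (Rabs (Q M))). fold K in H. lra.
    - intros s hs. specialize (hM2 s hs). simpl in hM2. fold C in hM2.
      pose proof (Rabs_pos (dv Q r0 a b 0 s)). pose proof (Rabs_pos (dw Q r0 a b 0 s)). lra. }
  intros n s hs. destruct (hb' n s hs) as [h1 h2].
  assert (hC : 0 <= C) by (unfold C; pose proof (Rabs_pos (dv Q r0 a b 0 M2)); pose proof (Rabs_pos (dw Q r0 a b 0 M2)); lra).
  pose proof (W_le K r0 A B s ltac:(lra) hr hs).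
  assert (0 <= C * (/2)^n) by (apply Rmult_le_pos; [lra|apply pow_le; lra]).
  assert (C * (/2)^n * W K r0 s <= C * (2 * exp (2 * K * (B - A))) * (/2)^n).
  { replace (C * (2 * exp (2 * K * (B - A))) * (/2)^n) with (C * (/2)^n * (2 * exp (2 * K * (B - A)))) by ring.
    apply Rmult_le_compat_l; auto. }
  lra.
Qed.
Lemma cv_shift (u : nat -> R) l : Un_cv u l -> Un_cv (fun n => u (S n)) l.
Proof. intros h eps he. destruct (h eps he) as [N HN]. exists N. intros n hn. apply HN. lia. Qed.

Lemma lin_exist Q r0 a b (hQ : forall x, continuity_pt Q x) :
  exists v w : R -> R, v r0 = a /\ w r0 = b /\
    forall x, derivable_pt_lim v x (w x) /\ derivable_pt_lim w x (Q x * v x).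
Proof.
  set (v := fun y => Lim (fun n => vn Q r0 a b n y)).
  set (w := fun y => Lim (fun n => wn Q r0 a b n y)).
  exists v, w. split; [|split].
  - unfold v, Lim. rewrite (Lim_seq_ext _ (fun _ => a)) by (intros; apply v_r0; auto).
    rewrite Lim_seq_const. reflexivity.
  - unfold w, Lim. rewrite (Lim_seq_ext _ (fun _ => b)) by (intros; apply w_r0; auto).
    rewrite Lim_seq_const. reflexivity.
  - intros x.
    set (A := Rmin x r0 - 1). set (B := Rmax x r0 + 1).
    assert (hr : A <= r0 <= B) by (unfold A, B; pose proof (Rmin_r x r0); pose proof (Rmax_r x r0); lra).
    destruct (Lbnd2 Q r0 a b hQ A B hr) as [D [K [hK [hQK hb]]]].
    set (r1 := mkposreal 1 Rlt_0_1).
    assert (hball : forall y, Boule x r1 y -> A <= y <= B).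
    { intros y hy. unfold Boule in hy. simpl in hy. apply Rlt_le, abs_inv in hy.
      unfold A, B; pose proof (Rmin_l x r0); pose proof (Rmax_l x r0); lra. }
    assert (hv : forall y, Boule x r1 y -> Un_cv (fun n => vn Q r0 a b n y) (v y) /\
               forall n, Rabs (v y - vn Q r0 a b n y) <= 2 * D * (/2)^n).
    { intros y hy. apply geo_conv. intros n. apply (hb n y (hball y hy)). }
    assert (hw : forall y, Boule x r1 y -> Un_cv (fun n => wn Q r0 a b n y) (w y) /\
               forall n, Rabs (w y - wn Q r0 a b n y) <= 2 * D * (/2)^n).
    { intros y hy. apply geo_conv. intros n. apply (hb n y (hball y hy)). }
    assert (hx : Boule x r1 x) by (unfold Boule; simpl; rewrite Rminus_diag, Rabs_R0; lra).
    assert (cvv : CVU (vn Q r0 a b) v x r1).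
    { intros eps he. destruct (geo_small (2 * D) eps he) as [N HN]. exists N.
      intros n y hn hy. destruct (hv y hy) as [_ h]. specialize (h n). specialize (HN n hn).
      pose proof (Rle_abs (2 * D * (/2)^n)). lra. }
    assert (cvw : CVU (wn Q r0 a b) w x r1).
    { intros eps he. destruct (geo_small (2 * D) eps he) as [N HN]. exists N.
      intros n y hn hy. destruct (hw y hy) as [_ h]. specialize (h n). specialize (HN n hn).
      pose proof (Rle_abs (2 * D * (/2)^n)). lra. }
    assert (ctv : forall y, Boule x r1 y -> continuity_pt v y).
    { apply (CVU_continuity _ _ x r1 cvv). intros n y _. apply (it_cont Q r0 a b hQ n). }
    assert (ctw : forall y, Boule x r1 y -> continuity_pt w y).
    { apply (CVU_continuity _ _ x r1 cvw). intros n y _. apply (it_cont Q r0 a b hQ n). }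
    split.
    + apply (derivable_pt_lim_CVU (fun n => vn Q r0 a b (S n)) (wn Q r0 a b) v w x x r1); [exact hx| | |exact cvw|exact ctw].
      * intros y n _. apply der_v; auto.
      * intros y hy. apply (cv_shift (fun n => vn Q r0 a b n y)). apply hv; auto.
    + apply (derivable_pt_lim_CVU (fun n => wn Q r0 a b (S n)) (fun n y => Q y * vn Q r0 a b n y)
               w (fun y => Q y * v y) x x r1); [exact hx| | | |].
      * intros y n _. apply der_w; auto.
      * intros y hy. apply (cv_shift (fun n => wn Q r0 a b n y)). apply hw; auto.
      * intros eps he. destruct (geo_small (K * (2 * D)) eps he) as [N HN]. exists N.
        intros n y hn hy. destruct (hv y hy) as [_ h]. specialize (h n). specialize (HN n hn).
        specialize (hQK y (hball y hy)).
        rewrite <- Rmult_minus_distr_l, Rabs_mult.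
        pose proof (Rle_abs (K * (2 * D) * (/2)^n)).
        pose proof (Rabs_pos (Q y)). pose proof (Rabs_pos (v y - vn Q r0 a b n y)).
        assert (Rabs (Q y) * Rabs (v y - vn Q r0 a b n y) <= K * (2 * D * (/2)^n))
          by (apply Rmult_le_compat; auto).
        lra.
      * intros y hy. apply continuity_pt_mult; auto.
Qed.
Lemma part2 (Q : R -> R) (a Rr c0 : R) (v v' : R -> R) (hc0 : 0 <= c0) :
  a < Rr -> (forall r, a <= r <= Rr -> 0 <= Q r) ->
  (forall r, a <= r <= Rr ->
         derivable_pt_lim v r (v' r) /\
         derivable_pt_lim v' r (- (v r * (- Q r)))) ->
  v' a = c0 * v a -> v Rr = 0 -> forall r, a <= r <= Rr -> v r = 0.
Proof.
  intros hR hQ hd h0 h1.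
  assert (hf : forall r, a <= r <= Rr -> v a * v' a <= v r * v' r).
  { intros r hr. apply (mono (fun x => v x * v' x) (fun x => v' x * v' x + v x * (v x * Q x))).
    lra. intros c hc. destruct (hd c ltac:(lra)) as [d1 d2].
    replace (v' c * v' c + v c * (v c * Q c)) with (v' c * v' c + v c * (- (v c * - Q c))) by ring.
    apply (derivable_pt_lim_mult v v'); auto.
    intros c hc. specialize (hQ c ltac:(lra)). nra. }
  assert (hf0 : 0 <= v a * v' a).
  { rewrite h0. nra. }
  assert (hs : forall x y, a <= x <= y -> y <= Rr -> v x * v x <= v y * v y).
  { intros x y hx hy. apply (mono (fun x => v x * v x) (fun x => 2 * (v x * v' x))). lra.
    intros c hc. destruct (hd c ltac:(lra)) as [d1 d2].
    replace (2 * (v c * v' c)) with (v' c * v c + v c * v' c) by ring.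
    apply (derivable_pt_lim_mult v v); auto.
    intros c hc. specialize (hf c ltac:(lra)). lra. }
  intros r hr. specialize (hs r Rr ltac:(lra) ltac:(lra)). rewrite h1 in hs. nra.
Qed.

Lemma Qpot_cont m k lam x : 0 < m -> 0 < x -> continuity_pt (Qpot m k lam) x.
Proof.
  intros hm hx.
  assert (h : ex_derive (Qpot m k lam) x).
  { unfold Qpot. auto_derive.
    assert (0 < m * / (2 * x)) by (apply Rmult_lt_0_compat; [lra| apply Rinv_0_lt_compat; lra]).
    repeat split; apply Rgt_not_eq; unfold Rgt; try lra; repeat apply Rmult_lt_0_compat; lra. }
  destruct h as [l hl]. apply is_derive_Reals in hl. eapply der_cont; exact hl.
Qed.

Theorem mainTheorem4 (m : R) (k : Z) (lam : R)
  (hm : 0 < m) (hk : k <> 0%Z) (hlam : lam <= 0) :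
  (exists gam : R -> R,
      gam (m / 2) = / m /\
      forall r, m / 2 <= r ->
        derivable_pt_lim gam r (Qpot m k lam r - gam r ^ 2))
  /\
  (forall (Rr : R) (v v' : R -> R), m / 2 < Rr ->
      (forall r, m / 2 <= r <= Rr ->
         derivable_pt_lim v r (v' r) /\
         derivable_pt_lim v' r (- (v r * (- Qpot m k lam r))))
      -> v' (m / 2) = / m * v (m / 2)
      -> v Rr = 0
      -> forall r, m / 2 <= r <= Rr -> v r = 0).
Proof.
  split.
  - set (Qt := fun r => Qpot m k lam (Rmax r (m / 2))).
    assert (hQt : forall x, continuity_pt Qt x).
    { intros x. unfold Qt.
      apply (continuity_pt_comp (fun r => Rmax r (m / 2)) (Qpot m k lam) x).
      + apply (continuity_pt_locally_ext (fun r => (r + m / 2 + Rabs (r - m / 2)) / 2) _ 1 x Rlt_0_1).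
        * intros y _. unfold Rmax, Rabs. destruct (Rle_dec y (m / 2)); destruct (Rcase_abs (y - m / 2)); lra.
        * apply continuity_pt_div. apply continuity_pt_plus. apply continuity_pt_plus.
          apply continuity_pt_id. apply continuity_pt_const; intros ? ?; reflexivity.
          apply (continuity_pt_comp (fun r => r - m / 2) Rabs). apply continuity_pt_minus.
          apply continuity_pt_id. apply continuity_pt_const; intros ? ?; reflexivity.
          apply Rcontinuity_abs. apply continuity_pt_const; intros ? ?; reflexivity. lra.
      + apply Qpot_cont; auto. pose proof (Rmax_r x (m / 2)). lra. }
    assert (hQp : forall x, 0 <= Qt x).
    { intros x. unfold Qt. apply Qpos; auto. pose proof (Rmax_r x (m / 2)). lra. }
    destruct (lin_exist Qt (m / 2) 1 (/ m) hQt) as [v [w [hv0 [hw0 hd]]]].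
    assert (hf : forall r, m / 2 <= r -> / m <= v r * w r).
    { intros r hr.
      replace (/ m) with (v (m / 2) * w (m / 2)) by (rewrite hv0, hw0; ring).
      apply (mono (fun x => v x * w x) (fun x => w x * w x + v x * (Qt x * v x))); auto.
      - intros c _. destruct (hd c) as [d1 d2]. apply (derivable_pt_lim_mult v w); auto.
      - intros c _. specialize (hQp c). nra. }
    exists (fun r => w r / v r). split.
    + rewrite hv0, hw0. field. lra.
    + intros r hr. specialize (hf r hr).
      assert (hvn : v r <> 0).
      { intros h. rewrite h in hf. assert (0 < / m) by (apply Rinv_0_lt_compat; lra). lra. }
      destruct (hd r) as [d1 d2].
      assert (hQe : Qt r = Qpot m k lam r).
      { unfold Qt. rewrite Rmax_left; auto. }
      pose proof (derivable_pt_lim_div w v r _ _ d2 d1 hvn) as hdiv.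
      replace (Qpot m k lam r - (w r / v r) ^ 2) with
        ((Qt r * v r * v r - w r * w r) / (v r)²).
      * exact hdiv.
      * rewrite hQe. unfold Rsqr. field. auto.
  - intros Rr v v' hR hd h0 h1.
    apply (part2 (Qpot m k lam) (m / 2) Rr (/ m) v v'); auto.
    + apply Rlt_le, Rinv_0_lt_compat; lra.
    + intros r hr. apply Qpos; auto. lra.
Qed.
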